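(* Let $n\in\mathbb N$, let $0\le x_0<x_1<\dots<x_n\le1$, let $\nu_1,\dots,\nu_n>0$, let $a_1,\dots,a_n\in(0,1]$, and let $\alpha_0,\dots,\alpha_n>0$. (a) If $x_n-x_0<1$, then there exist a unique $C>0$ and a unique system of points $y_1,\dots,y_n$ with $x_j<y_{j+1}<x_{j+1}$ for $j=0,\dots,n-1$ such that $$S(t):=C\prod_{k=1}^n|\sin(a_k\pi(t-y_k))|^{\nu_k}$$ satisfies $S(x_j)=\alpha_j$ for $j=0,\dots,n$. (b) If moreover $\nu_1,\dots,\nu_n\in\mathbb N$, then for these $y_k$ and $C$ the function $T(t):=C\prod_{k=1}^n\sin^{\nu_k}(a_k\pi(t-y_k))$ satisfies $$T(x_j)=(-1)^{\sum_{k=j+1}^n\nu_k}\alpha_j\quad(j=0,1,\dots,n).$$ (c) If $a_1,\dots,a_n<1$, then the assertions of (a) and (b) remain true without the assumption $x_n-x_0<1$. *)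

(* Defs.v *)
From mathcomp Require Import all_boot all_order all_algebra.
From mathcomp Require Import all_classical all_reals all_analysis.
Set Implicit Arguments. Unset Strict Implicit. Unset Printing Implicit Defensive.
Import Order.TTheory GRing.Theory Num.Theory.
Local Open Scope ring_scope.

Definition S_fun (R : realType) (n : nat) (C : R) (a nu y : nat -> R) (t : R) : R :=
  C * \prod_(1 <= k < n.+1) (powR `|sin (a k * pi * (t - y k))| (nu k)).

Definition T_fun (R : realType) (n : nat) (C : R) (a y : nat -> R) (m : nat -> nat)
    (t : R) : R :=
  C * \prod_(1 <= k < n.+1) (sin (a k * pi * (t - y k))) ^+ (m k).

Definition is_solution (R : realType) (n : nat) (x a nu alpha : nat -> R)
    (C : R) (y : nat -> R) : Prop :=
  0 < C /\
  (forall j, (j < n)%N -> x j < y j.+1 /\ y j.+1 < x j.+1) /\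
  (forall j, (j <= n)%N -> S_fun n C a nu y (x j) = alpha j).

(* Main.v *)
Require Import Defs.
From mathcomp Require Import all_boot all_order all_algebra.
From mathcomp Require Import all_classical all_reals all_analysis.
From mathcomp.algebra_tactics Require Import ring lra.
Import Order.TTheory GRing.Theory Num.Theory.
Import numFieldNormedType.Exports.
Local Open Scope ring_scope.

Lemma sin_id (R : realType) (A B U V : R) :
  sin (A - V) * sin (B - U) - sin (A - U) * sin (B - V) = sin (A - B) * sin (V - U).
Proof. rewrite !sinB; ring. Qed.

Lemma cont_eps (R : realType) (f : R -> R) (c : R) : {for c, continuous f} ->
  forall e : R, 0 < e -> exists2 d : R, 0 < d & forall s, `|c - s| < d -> `|f c - f s| < e.
Proof.
move=> fc e e0.
have := @cvgr_dist_lt _ _ _ _ _ _ _ fc _ e0.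
move=> /(_ _) /nbhs_ballP [d d0 H].
exists d => // s hs; exact: H.
Qed.

Lemma pos_near (R : realType) (f : R -> R) (c : R) : {for c, continuous f} ->
  0 < f c -> exists2 d : R, 0 < d & forall s, `|c - s| < d -> 0 < f s.
Proof.
move=> fc hc; have [d d0 H] := @cont_eps _ _ _ fc _ hc.
exists d => // s hs; have := H s hs; rewrite ltr_norml => /andP[_ h]; lra.
Qed.

Lemma ln_core (R : realType) (A1 A2 B1 B2 : R) : 0 < A1 * B2 -> A1 * B2 <= A2 * B1 ->
  ln `|A1| - ln `|B1| <= ln `|A2| - ln `|B2|.
Proof.
move=> h1 h2.
have h3 : 0 < A2 * B1 by apply: lt_le_trans h2.
have nz : forall u v : R, 0 < u * v -> 0 < `|u| /\ 0 < `|v|.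
  move=> u v huv; rewrite !normr_gt0; split; apply/eqP => e;
  by move: huv; rewrite e ?mul0r ?mulr0 ltxx.
have [a1 b2] := nz _ _ h1; have [a2 b1] := nz _ _ h3.
have e1 : ln `|A1| + ln `|B2| = ln (A1 * B2).
  by rewrite -lnM ?posrE // -normrM gtr0_norm.
have e2 : ln `|A2| + ln `|B1| = ln (A2 * B1).
  by rewrite -lnM ?posrE // -normrM gtr0_norm.
have : ln (A1 * B2) <= ln (A2 * B1) by rewrite ler_ln ?posrE.
lra.
Qed.

Lemma ln_core_lt (R : realType) (A1 A2 B1 B2 : R) : A1 * B2 < 0 -> A1 * B2 < A2 * B1 ->
  A2 * B1 < 0 -> ln `|A2| - ln `|B2| < ln `|A1| - ln `|B1|.
Proof.
move=> h1 h2 h3.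
have nz : forall u v : R, u * v < 0 -> 0 < `|u| /\ 0 < `|v|.
  move=> u v huv; rewrite !normr_gt0; split; apply/eqP => e;
  by move: huv; rewrite e ?mul0r ?mulr0 ltxx.
have [a1 b2] := nz _ _ h1; have [a2 b1] := nz _ _ h3.
have e1 : ln `|A1| + ln `|B2| = ln (- (A1 * B2)).
  by rewrite -lnM ?posrE // -normrM ltr0_norm.
have e2 : ln `|A2| + ln `|B1| = ln (- (A2 * B1)).
  by rewrite -lnM ?posrE // -normrM ltr0_norm.
have : ln (- (A2 * B1)) < ln (- (A1 * B2)).
  by rewrite ltr_ln ?posrE ?oppr_gt0 // ltrN2.
lra.
Qed.
Section Main.
Variables (R : realType) (n : nat) (x nu a : nat -> R).
Hypothesis hxinc : forall j, (j < n)%N -> x j < x j.+1.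
Hypothesis hnu : forall i, (i < n)%N -> 0 < nu i.+1.
Hypothesis ha : forall i, (i < n)%N -> 0 < a i.+1.
Hypothesis hw : forall i, (i < n)%N -> a i.+1 * (x n - x 0) < 1.

Lemma x_le i j : (i <= j)%N -> (j <= n)%N -> x i <= x j.
Proof.
move=> hij; elim: j hij => [|j IH]; first by rewrite leqn0 => /eqP ->.
rewrite leq_eqVlt => /orP[/eqP -> //|]; rewrite ltnS => hij hj.
apply: (le_trans (IH hij (ltnW hj))); apply/ltW; exact: hxinc.
Qed.

Lemma x_lt i j : (i < j)%N -> (j <= n)%N -> x i < x j.
Proof.
move=> hij hj; case: j hij hj => // j hij hj.
apply: (le_lt_trans (@x_le i j hij (ltnW hj))); exact: hxinc.
Qed.

Definition sn i t := sin (a i.+1 * pi * t).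

Lemma sn_pos i t : (i < n)%N -> 0 < t -> t <= x n - x 0 -> 0 < sn i t.
Proof.
move=> hi t0 tD; apply: sin_gt0_pi; apply/andP; split.
  by rewrite mulr_gt0 // mulr_gt0 // ?ha // pi_gt0.
have h1 : a i.+1 * t < 1.
  apply: (le_lt_trans _ (hw i hi)); rewrite ler_pM2l //; exact: ha.
have hp := @pi_gt0 R.
have : 0 < pi * (1 - a i.+1 * t) by rewrite mulr_gt0 // subr_gt0.
rewrite mulrBr mulr1 subr_gt0 => h; apply: le_lt_trans h; rewrite le_eqVlt; apply/orP; left.
apply/eqP; ring.
Qed.

Lemma sn_neg i t : (i < n)%N -> t < 0 -> - (x n - x 0) <= t -> sn i t < 0.
Proof.
move=> hi t0 tD; rewrite /sn -[t]opprK mulrN sinN oppr_lt0.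
apply: sn_pos => //; first by rewrite oppr_gt0.
by rewrite lerNl.
Qed.

Lemma sn_ge0 i t : (i < n)%N -> 0 <= t -> t <= x n - x 0 -> 0 <= sn i t.
Proof.
move=> hi; rewrite le_eqVlt => /orP[/eqP <-|t0 tD]; last by apply/ltW; apply: sn_pos.
by rewrite /sn mulr0 sin0.
Qed.

Definition K i t := nu i.+1 * ln `|sn i t|.
Definition ps i q p s := K i (q - s) - K i (p - s).
Definition psi j i s := ps i (x j.+1) (x j) s.
Definition E (y : nat -> R) j := \sum_(i < n) K i (x j - y i).
Definition d (y : nat -> R) j := \sum_(i < n) psi j i (y i).
Definition box (y : nat -> R) := forall i, (i < n)%N -> x i < y i < x i.+1.

Lemma sn_id i q p s1 s2 : sn i (q - s2) * sn i (p - s1) - sn i (q - s1) * sn i (p - s2)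
  = sn i (q - p) * sn i (s2 - s1).
Proof. rewrite /sn !mulrBr; exact: sin_id. Qed.

Lemma psE i q p s : ps i q p s = nu i.+1 * (ln `|sn i (q - s)| - ln `|sn i (p - s)|).
Proof. by rewrite /ps /K mulrBr. Qed.

Lemma ps_mono i q p s1 s2 : (i < n)%N -> 0 < q - p -> q - p <= x n - x 0 ->
  s1 <= s2 -> s2 - s1 <= x n - x 0 -> 0 < sn i (q - s1) * sn i (p - s2) ->
  ps i q p s1 <= ps i q p s2.
Proof.
move=> hi hqp hqpD h12 h12D hpos; rewrite !psE ler_pM2l ?hnu //.
apply: ln_core => //; rewrite -subr_ge0 sn_id.
apply: mulr_ge0; first by apply/ltW; apply: sn_pos.
by apply: sn_ge0 => //; rewrite subr_ge0.
Qed.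

Lemma ps_mono_lt i q p s1 s2 : (i < n)%N -> 0 < q - p -> q - p <= x n - x 0 ->
  s1 < s2 -> s2 - s1 <= x n - x 0 -> sn i (q - s1) * sn i (p - s2) < 0 ->
  sn i (q - s2) * sn i (p - s1) < 0 ->
  ps i q p s2 < ps i q p s1.
Proof.
move=> hi hqp hqpD h12 h12D hn1 hn2; rewrite !psE ltr_pM2l ?hnu //.
apply: ln_core_lt => //; rewrite -subr_gt0 sn_id.
apply: mulr_gt0; first by apply: sn_pos.
by apply: sn_pos => //; rewrite subr_gt0.
Qed.

Lemma negneg_pos (u v : R) : u < 0 -> v < 0 -> 0 < u * v.
Proof. by move=> hu hv; rewrite -mulrNN mulr_gt0 // oppr_gt0. Qed.
Lemma posneg_neg (u v : R) : 0 < u -> v < 0 -> u * v < 0.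
Proof. by move=> hu hv; rewrite -oppr_gt0 -mulrN mulr_gt0 // oppr_gt0. Qed.

Lemma psi_lt_idx j i s1 s2 : (i < j)%N -> (j < n)%N -> x i <= s1 -> s1 <= s2 -> s2 < x i.+1 ->
  psi j i s1 <= psi j i s2.
Proof.
move=> hij hj h1 h12 h2.
have hin : (i < n)%N by apply: ltn_trans hj.
have f1 := @x_le 0 i (leq0n _) (ltnW hin).
have f2 := @x_le i.+1 j hij (ltnW hj).
have f3 := @x_le j.+1 n hj (leqnn _).
have f4 := @hxinc j hj.
have f5 := @x_le 0 j (leq0n _) (ltnW hj).
apply: ps_mono => //; try lra.
by apply: mulr_gt0; apply: sn_pos => //; lra.
Qed.

Lemma psi_gt_idx j i s1 s2 : (j < i)%N -> (i < n)%N -> x i < s1 -> s1 <= s2 -> s2 <= x i.+1 ->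
  psi j i s1 <= psi j i s2.
Proof.
move=> hji hi h1 h12 h2.
have hjn : (j < n)%N by apply: ltn_trans hi.
have f1 := @x_le j.+1 i hji (ltnW hi).
have f3 := @x_le i.+1 n hi (leqnn _).
have f4 := @hxinc j hjn.
have f5 := @x_le 0 j (leq0n _) (ltnW hjn).
apply: ps_mono => //; try lra.
by apply: negneg_pos; apply: sn_neg => //; lra.
Qed.

Lemma psi_own i s1 s2 : (i < n)%N -> x i < s1 -> s1 < s2 -> s2 < x i.+1 ->
  psi i i s2 < psi i i s1.
Proof.
move=> hi h1 h12 h2.
have f1 := @x_le 0 i (leq0n _) (ltnW hi).
have f3 := @x_le i.+1 n hi (leqnn _).
apply: ps_mono_lt => //; try lra.
  by apply: posneg_neg; [apply: sn_pos|apply: sn_neg] => //; lra.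
by apply: posneg_neg; [apply: sn_pos|apply: sn_neg] => //; lra.
Qed.

Lemma ps_tot i s1 s2 : (i < n)%N -> x 0 < s1 -> s1 < s2 -> s2 < x n ->
  ps i (x n) (x 0) s2 < ps i (x n) (x 0) s1.
Proof.
move=> hi h1 h12 h2.
apply: ps_mono_lt => //; try lra.
  by apply: posneg_neg; [apply: sn_pos|apply: sn_neg] => //; lra.
by apply: posneg_neg; [apply: sn_pos|apply: sn_neg] => //; lra.
Qed.

Lemma sum_psi i s : \sum_(j < n) psi j i s = ps i (x n) (x 0) s.
Proof.
have := @telescope_sumr _ 0 n (fun j => K i (x j - s)) (leq0n n).
rewrite big_mkord => h; rewrite /ps -h; apply: eq_bigr => j _; by rewrite /psi /ps.
Qed.

Lemma psi_off j i s1 s2 : (j < n)%N -> (i < n)%N -> i != j ->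
  x i < s1 -> s1 <= s2 -> s2 < x i.+1 -> psi j i s1 <= psi j i s2.
Proof.
move=> hj hi hij h1 h12 h2; case: (ltngtP i j) hij => // hij _.
  by apply: psi_lt_idx => //; apply/ltW.
by apply: psi_gt_idx => //; apply/ltW.
Qed.
Lemma compare y w : box y -> box w -> (forall j, (j < n)%N -> d w j <= d y j) ->
  forall i, (i < n)%N -> y i <= w i.
Proof.
move=> hby hbw hd i0 hi0; rewrite leNgt; apply/negP => hlt.
pose P := fun j : 'I_n => w j < y j.
pose Dl := fun (j i : nat) => psi j i (y i) - psi j i (w i).
have H1 : 0 <= \sum_(j < n | P j) (d y j - d w j).
  by apply: sumr_ge0 => j _; rewrite subr_ge0 hd.
have H2 : \sum_(j < n | P j) (d y j - d w j) = \sum_(i < n) \sum_(j < n | P j) Dl j i.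
  by rewrite exchange_big /=; apply: eq_bigr => j _; rewrite /d -sumrB.
have H3 : forall i : 'I_n, P i -> \sum_(j < n | P j) Dl j i < 0.
  move=> i hPi; have hPi' : w i < y i := hPi.
  have [yl yr] := andP (hby i (ltn_ord i)).
  have [wl wr] := andP (hbw i (ltn_ord i)).
  have f1 := @x_le 0 i (leq0n _) (ltnW (ltn_ord i)).
  have f3 := @x_le i.+1 n (ltn_ord i) (leqnn _).
  have tot : \sum_(j < n) Dl j i = ps i (x n) (x 0) (y i) - ps i (x n) (x 0) (w i).
    by rewrite /Dl sumrB !sum_psi.
  have hlt' := @ps_tot i (w i) (y i) (ltn_ord i).
  have hlt'' : ps i (x n) (x 0) (y i) < ps i (x n) (x 0) (w i).
    by apply: hlt'; lra.
  have nonP : 0 <= \sum_(j < n | ~~ P j) Dl j i.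
    apply: sumr_ge0 => j hPj; rewrite /Dl subr_ge0.
    apply: psi_off => //; try lra.
    apply/eqP => e; move: hPj hPi; rewrite /P e => /negP; done.
  rewrite (bigID P) /= in tot; lra.
have H4 : forall i : 'I_n, \sum_(j < n | P j) Dl j i <= 0.
  move=> i; case hPi : (P i); first by apply/ltW; apply: H3.
  have hyw : y i <= w i by rewrite leNgt; apply/negP; rewrite -/(P i) hPi.
  have [yl yr] := andP (hby i (ltn_ord i)).
  have [wl wr] := andP (hbw i (ltn_ord i)).
  apply: sumr_le0 => j hPj; rewrite /Dl subr_le0.
  apply: psi_off => //.
  apply/eqP => e; move: hPj hPi; rewrite /P e => ->; done.
have := H1; rewrite H2 (bigD1 (Ordinal hi0)) //=.
have := H3 (Ordinal hi0) hlt.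
have : \sum_(i < n | i != Ordinal hi0) \sum_(j < n | P j) Dl j i <= 0.
  by apply: sumr_le0 => i _; apply: H4.
lra.
Qed.
Lemma cont_sn i c0 (s : R) : {for s, continuous (fun t => sn i (c0 - t))}.
Proof.
apply: (continuous_comp (f := fun t => a i.+1 * pi * (c0 - t))); last exact: continuous_sin.
apply: continuousM; first exact: cvg_cst.
apply: continuousB; first exact: cvg_cst.
exact: cvg_id.
Qed.

Lemma cont_K i c0 (s : R) : sn i (c0 - s) != 0 -> {for s, continuous (fun t => K i (c0 - t))}.
Proof.
move=> hnz; apply: continuousM; first exact: cvg_cst.
apply: (continuous_comp (f := fun t => `|sn i (c0 - t)|)); last first.
  by apply: continuous_ln; rewrite normr_gt0.
apply: (continuous_comp (f := fun t => sn i (c0 - t))); last exact: norm_continuous.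
exact: cont_sn.
Qed.

Lemma cont_psi j i (s : R) : sn i (x j.+1 - s) != 0 -> sn i (x j - s) != 0 ->
  {for s, continuous (psi j i)}.
Proof.
by move=> h1 h2; apply: continuousB; [apply: cont_K|apply: cont_K].
Qed.

Definition upd (y : nat -> R) m v := fun i => if i == m then v else y i.

Lemma d_upd y m v j : (m < n)%N -> d (upd y m v) j = d y j + (psi j m v - psi j m (y m)).
Proof.
move=> hm.
have : \sum_(i < n) psi j i (upd y m v i) - \sum_(i < n) psi j i (y i)
   = psi j m v - psi j m (y m).
  rewrite -sumrB (bigD1 (Ordinal hm)) //= big1 ?addr0; first by rewrite /upd eqxx.
  move=> i hi; rewrite /upd.
  have : (i : nat) != m by apply: contraNneq hi => e; apply/eqP/val_inj.
  by move=> /negbTE ->; rewrite subrr.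
rewrite /d; lra.
Qed.

Lemma blow_left m M : (m < n)%N -> exists v, x m < v < x m.+1 /\ M <= psi m m v.
Proof.
move=> hm; set Kc := expR (M / nu m.+1).
have hxm := @hxinc m hm.
have f1 := @x_le 0 m (leq0n _) (ltnW hm).
have f3 := @x_le m.+1 n hm (leqnn _).
pose f := fun t => sn m (x m.+1 - t) + Kc * sn m (x m - t).
have fc : {for x m, continuous f}.
  apply: continuousD; first exact: cont_sn.
  by apply: continuousM; [exact: cvg_cst|exact: cont_sn].
have f0 : 0 < f (x m).
  rewrite /f subrr /sn mulr0 sin0 mulr0 addr0; apply: sn_pos => //; lra.
have [dl dl0 H] := @pos_near _ _ _ fc f0.
set g := x m.+1 - x m.
have g0 : 0 < g by rewrite /g subr_gt0.
have gE : g = x m.+1 - x m by [].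
clearbody g.
set e := Order.min dl g.
have e0 : 0 < e by rewrite lt_min dl0 g0.
have edl : e <= dl by rewrite ge_min lexx.
have eg : e <= g by rewrite ge_min lexx orbT.
exists (x m + e / 2); split; first by apply/andP; split; lra.
have hv := H (x m + e / 2); rewrite /f in hv.
have hA : 0 < sn m (x m.+1 - (x m + e / 2)) by apply: sn_pos => //; lra.
have hB : sn m (x m - (x m + e / 2)) < 0 by apply: sn_neg => //; lra.
have := hv; rewrite ler0_norm; last lra.
move=> /(_ ltac:(lra)) hpos.
set A := sn m (x m.+1 - (x m + e / 2)) in hA hpos *.
set B := sn m (x m - (x m + e / 2)) in hB hpos *.
have hK : 0 < Kc by rewrite /Kc expR_gt0.
have hlt : Kc * `|B| < `|A| by rewrite (ltr0_norm hB) (gtr0_norm hA); lra.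
have hnuv := @hnu m hm.
have : ln (Kc * `|B|) < ln `|A|.
  rewrite ltr_ln // posrE; last by apply: lt_trans hlt; rewrite mulr_gt0 // normr_gt0 lt_eqF.
  by rewrite mulr_gt0 // normr_gt0 lt_eqF.
rewrite lnM ?posrE ?normr_gt0 ?lt_eqF // /Kc expRK => hl.
rewrite /psi psE -(divfK (lt0r_neq0 hnuv) M) [X in _ <= X]mulrC ler_pM2r //; lra.
Qed.

Lemma blow_right m M : (m < n)%N -> exists v, x m < v < x m.+1 /\ psi m m v <= M.
Proof.
move=> hm; set Kc := expR (M / nu m.+1).
have hxm := @hxinc m hm.
have f1 := @x_le 0 m (leq0n _) (ltnW hm).
have f3 := @x_le m.+1 n hm (leqnn _).
pose f := fun t => - (Kc * sn m (x m - t)) - sn m (x m.+1 - t).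
have fc : {for x m.+1, continuous f}.
  apply: continuousB; last exact: cont_sn.
  apply: continuousN.
  by apply: continuousM; [exact: cvg_cst|exact: cont_sn].
have hK : 0 < Kc by rewrite /Kc expR_gt0.
have f0 : 0 < f (x m.+1).
  rewrite /f subrr /sn mulr0 sin0 subr0 oppr_gt0 -/(sn m _).
  by rewrite pmulr_rlt0 //; apply: sn_neg => //; lra.
have [dl dl0 H] := @pos_near _ _ _ fc f0.
set g := x m.+1 - x m.
have g0 : 0 < g by rewrite /g subr_gt0.
have gE : g = x m.+1 - x m by [].
clearbody g.
set e := Order.min dl g.
have e0 : 0 < e by rewrite lt_min dl0 g0.
have edl : e <= dl by rewrite ge_min lexx.
have eg : e <= g by rewrite ge_min lexx orbT.
exists (x m.+1 - e / 2); split; first by apply/andP; split; lra.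
have hv := H (x m.+1 - e / 2); rewrite /f in hv.
have hA : 0 < sn m (x m.+1 - (x m.+1 - e / 2)) by apply: sn_pos => //; lra.
have hB : sn m (x m - (x m.+1 - e / 2)) < 0 by apply: sn_neg => //; lra.
have := hv; rewrite ger0_norm; last lra.
move=> /(_ ltac:(lra)) hpos.
set A := sn m (x m.+1 - (x m.+1 - e / 2)) in hA hpos *.
set B := sn m (x m - (x m.+1 - e / 2)) in hB hpos *.
have hlt : `|A| < Kc * `|B| by rewrite (ltr0_norm hB) (gtr0_norm hA); lra.
have hnuv := @hnu m hm.
have : ln `|A| < ln (Kc * `|B|).
  have pA : 0 < `|A| by rewrite normr_gt0 gt_eqF.
  have pB : 0 < Kc * `|B| by rewrite mulr_gt0 // normr_gt0 lt_eqF.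
  by rewrite ltr_ln ?posrE.
rewrite lnM ?posrE ?normr_gt0 ?lt_eqF // /Kc expRK => hl.
rewrite /psi psE -(divfK (lt0r_neq0 hnuv) M) [X in X <= _]mulrC ler_pM2r //; lra.
Qed.
Lemma subsol (b : nat -> R) : exists y, box y /\ forall j, (j < n)%N -> b j <= d y j.
Proof.
suff : forall k m, (m + k)%N = n -> exists y,
   (forall i, (m <= i < n)%N -> x i < y i < x i.+1) /\
   (forall j, (m <= j < n)%N -> forall z, box z ->
      (forall i, (m <= i < n)%N -> z i = y i) -> b j <= d z j).
  move=> /(_ n 0%N (add0n n)) [y [hb hd]]; exists y; split.
    by move=> i hi; apply: hb.
  by move=> j hj; apply: hd => // i hi.
elim=> [|k IH] m.
  rewrite addn0 => ->; exists (fun _ => 0); split => i; rewrite leqNgt => /andP[/negP] //.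
move=> hmk; have hm : (m < n)%N by rewrite -hmk addnS ltnS leq_addr.
have [y [hb hd]] := IH m.+1 ltac:(by rewrite addSnnS).
set c := \sum_(i < n | i != Ordinal hm)
            (if (i < m)%N then psi m i (x i) else psi m i (y i)).
have [v [hv hpv]] := blow_left m (b m - c) hm.
exists (upd y m v); split.
  move=> i /andP[hmi hin]; rewrite /upd; case: eqP => [->//|/eqP ne].
  apply: hb; rewrite hin andbT ltn_neqAle hmi andbT eq_sym; exact: ne.
move=> j /andP[hmj hjn] z hbz hz.
case: (eqVneq j m) => [ejm|nejm]; last first.
  apply: hd => //; first by rewrite hjn andbT ltn_neqAle hmj andbT eq_sym.
  move=> i /andP[hmi hin]; rewrite hz ?hin ?andbT; last exact: ltnW.
  by rewrite /upd ifN_eq // gtn_eqF.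
rewrite ejm; clear hmj hjn ejm j.
pose G := fun i : nat => if (i < m)%N then psi m i (x i) else psi m i (upd y m v i).
have h1 : \sum_(i < n) G i <= d z m.
  apply: ler_sum => i _; rewrite /G; case: ltnP => him.
    have [zl zr] := andP (hbz i (ltn_ord i)).
    by apply: psi_lt_idx => //; apply/ltW.
  by rewrite hz // him ltn_ord.
have h2 : \sum_(i < n) G i = psi m m v + c.
  rewrite (bigD1 (Ordinal hm)) //= /G ltnn /upd eqxx; congr (_ + _).
  apply: eq_bigr => i hi.
  have : (i : nat) != m by apply: contraNneq hi => e; apply/eqP/val_inj.
  by move=> /negbTE ->.
lra.
Qed.

Lemma supsol (b : nat -> R) : exists y, box y /\ forall j, (j < n)%N -> d y j <= b j.
Proof.
suff : forall m, (m <= n)%N -> exists y,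
   (forall i, (i < m)%N -> x i < y i < x i.+1) /\
   (forall j, (j < m)%N -> forall z, box z ->
      (forall i, (i < m)%N -> z i = y i) -> d z j <= b j).
  move=> /(_ n (leqnn n)) [y [hb hd]]; exists y; split.
    by move=> i hi; apply: hb.
  by move=> j hj; apply: hd => // i hi.
elim=> [|m IH] hmn.
  by exists (fun _ => 0); split.
have hm : (m < n)%N by [].
have [y [hb hd]] := IH (ltnW hm).
set c := \sum_(i < n | i != Ordinal hm)
            (if (m < i)%N then psi m i (x i.+1) else psi m i (y i)).
have [v [hv hpv]] := blow_right m (b m - c) hm.
exists (upd y m v); split.
  move=> i; rewrite ltnS leq_eqVlt => /orP[/eqP ->|him]; first by rewrite /upd eqxx.
  by rewrite /upd ifN_eq ?ltn_eqF //; apply: hb.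
move=> j; rewrite ltnS leq_eqVlt => /orP[/eqP ->|hjm] z hbz hz; last first.
  apply: hd => // i him; rewrite hz; last exact: ltnW.
  by rewrite /upd ifN_eq // ltn_eqF.
pose G := fun i : nat => if (m < i)%N then psi m i (x i.+1) else psi m i (upd y m v i).
have h1 : d z m <= \sum_(i < n) G i.
  apply: ler_sum => i _; rewrite /G; case: ltnP => him.
    have [zl zr] := andP (hbz i (ltn_ord i)).
    by apply: psi_gt_idx => //; apply/ltW.
  by rewrite hz // ltnS.
have h2 : \sum_(i < n) G i = psi m m v + c.
  rewrite (bigD1 (Ordinal hm)) //= /G ltnn /upd eqxx; congr (_ + _).
  apply: eq_bigr => i hi.
  have : (i : nat) != m by apply: contraNneq hi => e; apply/eqP/val_inj.
  by move=> /negbTE ->.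
lra.
Qed.
Lemma exists_sol (b : nat -> R) : exists y, box y /\ forall j, (j < n)%N -> d y j = b j.
Proof.
have [y0 [hb0 hd0]] := subsol b.
have [w [hbw hdw]] := supsol b.
pose Asub := fun y => box y /\ forall j, (j < n)%N -> b j <= d y j.
have below : forall y, Asub y -> forall i, (i < n)%N -> y i <= w i.
  move=> y [hby hdy] i hi; apply: compare => // j hj.
  exact: le_trans (hdw j hj) (hdy j hj).
pose S i : set R := fun r => exists y, Asub y /\ y i = r.
have hne : forall i, (S i !=set0)%classic.
  by move=> i; exists (y0 i); exists y0; split.
have hs : forall i, (i < n)%N -> has_sup (S i).
  move=> i hi; split; first exact: hne.
  by exists (w i) => r [y [hy <-]]; exact: below.
pose ys := fun i => sup (S i).
have ys_ge : forall y, Asub y -> forall i, (i < n)%N -> y i <= ys i.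
  move=> y hy i hi; apply: (sup_upper_bound (hs i hi)); by exists y.
have ys_le : forall i, (i < n)%N -> ys i <= w i.
  move=> i hi; apply: ge_sup; first exact: hne.
  by move=> r [y [hy <-]]; exact: below.
have hbs : box ys.
  move=> i hi; have [l _] := andP (hb0 i hi); have [_ r] := andP (hbw i hi).
  have := ys_ge y0 (conj hb0 hd0) i hi; have := ys_le i hi.
  move=> h1 h2; apply/andP; split; lra.
have nz1 : forall j, (j < n)%N -> sn j (x j.+1 - ys j) != 0.
  move=> j hj; have [l r] := andP (hbs j hj).
  have f3 := @x_le j.+1 n hj (leqnn _); have f1 := @x_le 0 j (leq0n _) (ltnW hj).
  by rewrite gt_eqF //; apply: sn_pos => //; lra.
have nz2 : forall j, (j < n)%N -> sn j (x j - ys j) != 0.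
  move=> j hj; have [l r] := andP (hbs j hj).
  have f3 := @x_le j.+1 n hj (leqnn _); have f1 := @x_le 0 j (leq0n _) (ltnW hj).
  by rewrite lt_eqF //; apply: sn_neg => //; lra.
have step1 : forall j, (j < n)%N -> b j <= d ys j.
  move=> j hj; apply/ler_addgt0Pr => e e0.
  have cont := @cont_psi j j (ys j) (nz1 j hj) (nz2 j hj).
  have [dl dl0 H] := @cont_eps _ _ _ cont _ e0.
  have [r [y [hAy hr]] hr2] := sup_adherent dl0 (hs j hj).
  have hyj : y j <= ys j by apply: ys_ge.
  have hdist := H (y j); rewrite ger0_norm in hdist; last by rewrite subr_ge0.
  have := hdist ltac:(rewrite /ys hr; lra).
  rewrite ltr_norml => /andP[hh1 hh2].
  have hsum : psi j j (ys j) - psi j j (y j) <= d ys j - d y j.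
    rewrite /d -sumrB (bigD1 (Ordinal hj)) //= lerDl.
    apply: sumr_ge0 => i hi; rewrite subr_ge0.
    have [l1 _] := andP (hAy.1 i (ltn_ord i)); have [_ r1] := andP (hbs i (ltn_ord i)).
    have nij : (i : nat) != j by apply: contraNneq hi => e'; apply/eqP/val_inj.
    apply: psi_off => //; exact: ys_ge.
  have := hAy.2 j hj; lra.
have step2 : forall j, (j < n)%N -> d ys j <= b j.
  move=> j hj; rewrite leNgt; apply/negP => hgt.
  have e0 : 0 < d ys j - b j by rewrite subr_gt0.
  have cont := @cont_psi j j (ys j) (nz1 j hj) (nz2 j hj).
  have [dl dl0 H] := @cont_eps _ _ _ cont _ e0.
  have [l r] := andP (hbs j hj).
  set g := x j.+1 - ys j.
  have g0 : 0 < g by rewrite /g subr_gt0.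
  have gE : g = x j.+1 - ys j by [].
  clearbody g.
  set eta := Order.min dl g.
  have eta0 : 0 < eta by rewrite lt_min dl0 g0.
  have edl : eta <= dl by rewrite ge_min lexx.
  have eg : eta <= g by rewrite ge_min lexx orbT.
  pose z := upd ys j (ys j + eta / 2).
  have hAz : Asub z.
    split.
      move=> i hi; rewrite /z /upd; case: eqP => [->|_]; last exact: hbs.
      apply/andP; split; lra.
    move=> k hk; rewrite /z d_upd //.
    case: (eqVneq k j) => [->|nekj].
      have := H (ys j + eta / 2); rewrite ler0_norm; last lra.
      move=> /(_ ltac:(lra)); rewrite ltr_norml => /andP[hh1 hh2]; lra.
    have : psi k j (ys j) <= psi k j (ys j + eta / 2).
      apply: psi_off => //; [by rewrite eq_sym|lra|lra].
    have := step1 k hk; lra.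
  have := ys_ge z hAz j hj; rewrite /z /upd eqxx; lra.
exists ys; split => // j hj; apply/eqP; rewrite eq_le step2 // step1 //.
Qed.

Lemma unique_sol y w : box y -> box w -> (forall j, (j < n)%N -> d y j = d w j) ->
  forall i, (i < n)%N -> y i = w i.
Proof.
move=> hy hw2 hd i hi; apply/eqP; rewrite eq_le; apply/andP; split.
  by apply: compare => // j hj; rewrite hd.
by apply: compare => // j hj; rewrite hd.
Qed.
Lemma sn_sign_pos (y1 : nat -> R) j i : box (fun i => y1 i.+1) -> (j <= n)%N -> (i < j)%N ->
  0 < sn i (x j - y1 i.+1).
Proof.
move=> hb hj hij; have hi : (i < n)%N by apply: leq_trans hj.
have [l r] := andP (hb i hi).
have f1 := @x_le 0 i (leq0n _) (ltnW hi).
have f2 := @x_le i.+1 j hij hj.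
have f4 := @x_le j n hj (leqnn _).
by apply: sn_pos => //; lra.
Qed.

Lemma sn_sign_neg (y1 : nat -> R) j i : box (fun i => y1 i.+1) -> (i < n)%N -> (j <= i)%N ->
  sn i (x j - y1 i.+1) < 0.
Proof.
move=> hb hi hji.
have [l r] := andP (hb i hi).
have f1 := @x_le 0 j (leq0n _) (leq_trans hji (ltnW hi)).
have f2 := @x_le j i hji (ltnW hi).
have f3 := @x_le i.+1 n hi (leqnn _).
by apply: sn_neg => //; lra.
Qed.

Lemma S_E C (y1 : nat -> R) j : box (fun i => y1 i.+1) -> (j <= n)%N ->
  S_fun n C a nu y1 (x j) = C * expR (E (fun i => y1 i.+1) j).
Proof.
move=> hb hj; rewrite /S_fun /E expR_sum; congr (_ * _).
rewrite big_add1 /= big_mkord; apply: eq_bigr => i _.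
change (sin (a i.+1 * pi * (x j - y1 i.+1))) with (sn i (x j - y1 i.+1)).
have nz : `|sn i (x j - y1 i.+1)| != 0.
  rewrite normr_eq0; case: (ltnP i j) => hij.
    by rewrite gt_eqF //; apply: sn_sign_pos.
  by rewrite lt_eqF //; apply: sn_sign_neg.
by rewrite /powR (negbTE nz) /K mulrC.
Qed.

Lemma E_step y j : E y j.+1 = E y j + d y j.
Proof. by rewrite /d /E /psi /ps sumrB addrC subrK. Qed.

End Main.

Theorem theorem9p7 (R : realType) (n : nat) (x nu a alpha : nat -> R)
  (hx0 : 0 <= x 0%N) (hxn : x n <= 1)
  (hxinc : forall j, (j < n)%N -> x j < x j.+1)
  (hnu : forall k, (1 <= k <= n)%N -> 0 < nu k)
  (ha : forall k, (1 <= k <= n)%N -> 0 < a k /\ a k <= 1)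
  (halpha : forall j, (j <= n)%N -> 0 < alpha j) :
  (* (a) under x_n - x_0 < 1;  (c) or under a_k < 1 for all k *)
  (x n - x 0%N < 1 \/ (forall k, (1 <= k <= n)%N -> a k < 1)) ->
  (* existence *)
  (exists (C : R) (y : nat -> R), is_solution n x a nu alpha C y) /\
  (* uniqueness of C and of y_1, ..., y_n *)
  (forall (C C' : R) (y y' : nat -> R),
     is_solution n x a nu alpha C y -> is_solution n x a nu alpha C' y' ->
     C = C' /\ (forall k, (1 <= k <= n)%N -> y k = y' k)) /\
  (* (b) integer exponents: sign pattern of T at the nodes *)
  (forall (C : R) (y : nat -> R) (m : nat -> nat),
     is_solution n x a nu alpha C y ->
     (forall k, (1 <= k <= n)%N -> nu k = (m k)%:R) ->
     forall j, (j <= n)%N ->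
       T_fun n C a y m (x j) = (-1) ^+ (\sum_(j.+1 <= k < n.+1) m k)%N * alpha j).
Proof.
move=> hdisj.
have hnu' : forall i, (i < n)%N -> 0 < nu i.+1 by move=> i hi; exact: hnu.
have ha' : forall i, (i < n)%N -> 0 < a i.+1 by move=> i hi; have [] := ha i.+1 hi.
have hD0 : 0 <= x n - x 0 by rewrite subr_ge0; exact: (@x_le R n x hxinc 0 n (leq0n n) (leqnn n)).
have hw : forall i, (i < n)%N -> a i.+1 * (x n - x 0) < 1.
  move=> i hi; have [a0 a1] := ha i.+1 hi; case: hdisj => [hlt|hlt1].
    nra.
  have := hlt1 i.+1 hi; nra.
have SE := @S_E R n x nu a hxinc ha' hw.
have ES := @E_step R n x nu a.
have EX := @exists_sol R n x nu a hxinc hnu' ha' hw.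
have UN := @unique_sol R n x nu a hxinc hnu' ha' hw.
pose b := fun j => ln (alpha j.+1) - ln (alpha j).
have sol_d : forall C y, is_solution n x a nu alpha C y ->
    box R n x (fun i => y i.+1) /\
    (forall j, (j < n)%N -> d R n x nu a (fun i => y i.+1) j = b j) /\
    C = alpha 0%N / expR (E R n x nu a (fun i => y i.+1) 0).
  move=> C y [C0 [hint hS]].
  have hb : box R n x (fun i => y i.+1) by move=> i hi; apply/andP; exact: hint.
  have hE : forall j, (j <= n)%N -> ln C + E R n x nu a (fun i => y i.+1) j = ln (alpha j).
    move=> j hj; rewrite -(hS j hj) SE // lnM ?posrE ?expR_gt0 //.
    by rewrite expRK.
  split => //; split.
    move=> j hj; have := hE j.+1 hj; have := hE j (ltnW hj).
    rewrite (ES (fun i => y i.+1) j) /b; lra.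
  have := hE 0%N (leq0n _) => h.
  have -> : alpha 0%N = C * expR (E R n x nu a (fun i => y i.+1) 0).
    by rewrite -(lnK (halpha 0%N (leq0n _))) -h expRD lnK.
  by rewrite mulfK // gt_eqF // expR_gt0.
split.
  have [ys [hbs hds]] := EX b.
  pose y := fun k => ys k.-1.
  pose C := alpha 0%N / expR (E R n x nu a ys 0).
  have hEj : forall j, (j <= n)%N -> E R n x nu a ys j = E R n x nu a ys 0 + (ln (alpha j) - ln (alpha 0%N)).
    elim=> [|j IH] hj; first by rewrite subrr addr0.
    rewrite ES IH ?(ltnW hj) // hds // /b; lra.
  exists C, y; split; first by rewrite /C divr_gt0 ?expR_gt0 ?halpha.
  split; first by move=> j hj; apply/andP; exact: hbs.
  have hb' : box R n x (fun i => y i.+1) := hbs.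
  move=> j hj; rewrite SE //.
  rewrite /y /= hEj // expRD expRD expRN lnK ?posrE ?halpha // lnK ?posrE ?halpha // /C.
  have := halpha 0%N (leq0n _); have := expR_gt0 (E R n x nu a ys 0).
  move=> h1 h2; field; rewrite ?gt_eqF //.
split.
  move=> C C' y y' hs hs'.
  have [hb [hd hC]] := sol_d C y hs.
  have [hb' [hd' hC']] := sol_d C' y' hs'.
  have heq := UN _ _ hb hb' (fun j hj => etrans (hd j hj) (esym (hd' j hj))).
  split.
    rewrite hC hC'; congr (_ / expR _); rewrite /E; apply: eq_bigr => i _.
    by rewrite heq.
  move=> k /andP[k1 kn]; have := heq k.-1 ltac:(by rewrite -ltnS prednK).
  by rewrite /= prednK.
move=> C y m hs hm j hj.
have [hb _] := sol_d C y hs.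
have hSj := hs.2.2 j hj.
rewrite -hSj /T_fun /S_fun.
have hprod : \prod_(1 <= k < n.+1) sin (a k * pi * (x j - y k)) ^+ m k =
   \prod_(1 <= k < n.+1) ((-1) ^+ (if (j < k)%N then m k else 0%N) *
                            `|sin (a k * pi * (x j - y k))| `^ nu k).
  apply: eq_big_nat => k /andP[k1 kn]; case: k k1 kn => // i _ kn.
  rewrite hm ?kn // powR_mulrn ?normr_ge0 //.
  change (sin (a i.+1 * pi * (x j - y i.+1))) with (sn R a i (x j - y i.+1)).
  case: (ltnP j i.+1) => hji.
    have := @sn_sign_neg R n x a hxinc ha' hw y j i hb kn hji.
    by move=> hneg; rewrite (ltr0_norm hneg) (exprNn (sn R a i (x j - y i.+1))) mulrA -exprMn mulrNN mulr1 expr1n mul1r.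
  have := @sn_sign_pos R n x a hxinc ha' hw y j i hb hj hji.
  by move=> hpos; rewrite (gtr0_norm hpos) expr0 mul1r.
rewrite hprod big_split /= prodrXr.
have -> : (\sum_(1 <= k < n.+1) (if (j < k)%N then m k else 0%N))%N =
          (\sum_(j.+1 <= k < n.+1) m k)%N.
  rewrite (@big_cat_nat _ _ _ j.+1) //= big1_seq ?add0n; last first.
    by move=> k /andP[_]; rewrite mem_index_iota => /andP[_ hk]; rewrite ltnNge -ltnS hk.
  apply: eq_big_nat => k /andP[hk _]; by rewrite hk.
by rewrite mulrCA.
Qed.
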